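(* For all $z\in\mathbb{R}$, $$\chi_1(z)=\sqrt{\pi}\,\varphi_1(z)+\psi_1(z),\qquad \chi_2(z)=\sqrt{\pi}\,\bigl[\varphi_2(z)-\ln 2\;\varphi_1(z)\bigr]+\psi_2(z),$$ where $\varphi_1,\varphi_2$ are odd and $\psi_1,\psi_2$ are even functions.
   Context: Define $\chi_0(z)=1$ and, for $i\ge1$, $\chi_i(z)=2\int_0^z dy\,e^{y^2}\int_{-\infty}^y du\,e^{-u^2}\chi_{i-1}(u)$, $z\in\mathbb{R}$. Define $\varphi_1(x)=\int_0^x e^{t^2}dt$; $\psi_1(x)=2\int_0^x dt\,e^{t^2}\int_0^t du\,e^{-u^2}$; $\varphi_2(x)=2\int_0^x dt_2\,e^{t_2^2}\int_0^{t_2}du_2\,e^{-u_2^2}\int_0^{u_2}dt_1\,e^{t_1^2}$; $\psi_2(x)=4\int_0^x dt_2\,e^{t_2^2}\int_0^{t_2}du_2\,e^{-u_2^2}\int_0^{u_2}dt_1\,e^{t_1^2}\int_0^{t_1}du_1\,e^{-u_1^2}$. *)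

(* Defs.v *)
From Stdlib Require Import Reals.
From Coquelicot Require Import Coquelicot.
Open Scope R_scope.

Fixpoint chi (i : nat) (z : R) : R :=
  match i with
  | O => 1
  | S j => 2 * RInt (fun y => exp (y ^ 2) *
             RInt_gen (fun u => exp (- u ^ 2) * chi j u)
                      (Rbar_locally m_infty) (at_point y)) 0 z
  end.

Definition phi1 (x : R) : R := RInt (fun t => exp (t ^ 2)) 0 x.

Definition psi1 (x : R) : R :=
  2 * RInt (fun t => exp (t ^ 2) * RInt (fun u => exp (- u ^ 2)) 0 t) 0 x.

Definition phi2 (x : R) : R :=
  2 * RInt (fun t2 => exp (t2 ^ 2) *
        RInt (fun u2 => exp (- u2 ^ 2) *
          RInt (fun t1 => exp (t1 ^ 2)) 0 u2) 0 t2) 0 x.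

Definition psi2 (x : R) : R :=
  4 * RInt (fun t2 => exp (t2 ^ 2) *
        RInt (fun u2 => exp (- u2 ^ 2) *
          RInt (fun t1 => exp (t1 ^ 2) *
            RInt (fun u1 => exp (- u1 ^ 2)) 0 t1) 0 u2) 0 t2) 0 x.

(* Main.v *)
Require Import Defs.
From Stdlib Require Import Reals Lra.
From Coquelicot Require Import Coquelicot.
Open Scope R_scope.
Implicit Types (f g h df : R -> R) (x y a b c k t r u v z : R).

Definition Cn (f : R -> R) := forall x, continuous f x.

Lemma is_derive_eq f x a b : is_derive f x a -> a = b -> is_derive f x b.
Proof. intros H ->; exact H. Qed.

Lemma D_mult f g x a b : is_derive f x a -> is_derive g x b ->
  is_derive (fun y => f y * g y) x (a * g x + f x * b).
Proof. intros Ha Hb. apply (is_derive_mult f g x a b Ha Hb). intros; apply Rmult_comm. Qed.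

Lemma D_plus f g x a b : is_derive f x a -> is_derive g x b ->
  is_derive (fun y => f y + g y) x (a + b).
Proof. intros Ha Hb. apply (is_derive_plus f g x a b Ha Hb). Qed.

Lemma D_minus f g x a b : is_derive f x a -> is_derive g x b ->
  is_derive (fun y => f y - g y) x (a - b).
Proof. intros Ha Hb. apply (is_derive_minus f g x a b Ha Hb). Qed.

Lemma D_scal f x k a : is_derive f x a -> is_derive (fun y => k * f y) x (k * a).
Proof. apply is_derive_scal. Qed.

Lemma D_const (c x : R) : is_derive (fun _ => c) x 0.
Proof. apply (is_derive_const c x). Qed.

Lemma D_id (x : R) : is_derive (fun y => y) x 1.
Proof. apply (is_derive_id x). Qed.

Lemma D_comp f g x a b : is_derive f (g x) a -> is_derive g x b ->
  is_derive (fun y => f (g y)) x (a * b).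
Proof. intros Ha Hb. eapply is_derive_eq. apply (is_derive_comp f g x a b Ha Hb).
  simpl. unfold scal; simpl; unfold mult; simpl. ring. Qed.

Lemma D_expsq x : is_derive (fun y => exp (y ^ 2)) x (2 * x * exp (x ^ 2)).
Proof. auto_derive; auto. simpl. ring. Qed.

Lemma D_expmsq x : is_derive (fun y => exp (- y ^ 2)) x (- (2 * x) * exp (- x ^ 2)).
Proof. auto_derive; auto. simpl. ring. Qed.

Lemma Cn_der f : (forall x, ex_derive f x) -> Cn f.
Proof. intros H x. apply (ex_derive_continuous (K:=R_AbsRing) (V:=R_NormedModule)), H. Qed.

Lemma Cn_expsq : Cn (fun y => exp (y ^ 2)).
Proof. apply Cn_der; intros; auto_derive; auto. Qed.
Lemma Cn_expmsq : Cn (fun y => exp (- y ^ 2)).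
Proof. apply Cn_der; intros; auto_derive; auto. Qed.

Lemma Cn_mult f g : Cn f -> Cn g -> Cn (fun y => f y * g y).
Proof. intros Hf Hg x. apply (continuous_mult f g x (Hf x) (Hg x)). Qed.
Lemma Cn_plus f g : Cn f -> Cn g -> Cn (fun y => f y + g y).
Proof. intros Hf Hg x. apply (continuous_plus f g x (Hf x) (Hg x)). Qed.
Lemma Cn_const c : Cn (fun _ => c).
Proof. intros x; apply continuous_const. Qed.
Lemma Cn_scal k f : Cn f -> Cn (fun y => k * f y).
Proof. intros; apply Cn_mult; auto using Cn_const. Qed.
Lemma Cn_minus f g : Cn f -> Cn g -> Cn (fun y => f y - g y).
Proof. intros Hf Hg. apply (Cn_plus f (fun y => - g y)); auto.
  intros x. apply (continuous_opp g x (Hg x)). Qed.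

Lemma exRI f a b : Cn f -> ex_RInt f a b.
Proof. intros H; apply (ex_RInt_continuous (V:=R_CompleteNormedModule)); intros; apply H. Qed.

Lemma D_prim f a x : Cn f -> is_derive (fun y => RInt f a y) x (f x).
Proof. intros H. apply (is_derive_RInt f (fun y => RInt f a y) a x).
  apply filter_forall; intros b; apply (RInt_correct (V:=R_CompleteNormedModule)), exRI, H. apply H. Qed.

Lemma Cn_prim f a : Cn f -> Cn (fun y => RInt f a y).
Proof. intros H x. apply (ex_derive_continuous (K:=R_AbsRing) (V:=R_NormedModule)). eexists. apply D_prim, H. Qed.

Lemma const_of_D0 f : (forall x, is_derive f x 0) -> forall a b, f a = f b.
Proof. intros H a b.
  assert (Hi := is_RInt_derive f (fun _ => 0) a b (fun x _ => H x) (fun x _ => continuous_const 0 x)).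
  apply is_RInt_unique in Hi. rewrite RInt_const in Hi. unfold scal in Hi; simpl in Hi; unfold mult in Hi; simpl in Hi.
  unfold minus, plus, opp in Hi; simpl in Hi. lra. Qed.

Lemma same_deriv f g h (x0 : R) : (forall x, is_derive f x (h x)) -> (forall x, is_derive g x (h x)) ->
  f x0 = g x0 -> forall x, f x = g x.
Proof. intros Hf Hg E x.
  assert (K := const_of_D0 (fun y => f y - g y)).
  assert (K' : (fun y => f y - g y) x = (fun y => f y - g y) x0).
  { apply K. intros y. eapply is_derive_eq. apply D_minus; [apply Hf|apply Hg]. ring. }
  simpl in K'. lra. Qed.

Lemma const_on f a b : a <= b -> (forall x, a <= x <= b -> is_derive f x 0) -> f a = f b.
Proof. intros Hab H.
  assert (Hi := is_RInt_derive f (fun _ => 0) a b).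
  rewrite Rmin_left, Rmax_right in Hi by lra.
  specialize (Hi H (fun x _ => continuous_const 0 x)).
  apply is_RInt_unique in Hi. rewrite RInt_const in Hi. unfold scal in Hi; simpl in Hi; unfold mult in Hi; simpl in Hi.
  unfold minus, plus, opp in Hi; simpl in Hi. lra. Qed.

Lemma ftc f df a b : (forall x, is_derive f x (df x)) -> Cn df -> RInt df a b = f b - f a.
Proof. intros H C. apply is_RInt_unique. apply (is_RInt_derive f df a b (fun x _ => H x) (fun x _ => C x)). Qed.

Lemma prim_odd f : Cn f -> (forall y, f (- y) = f y) -> forall x, RInt f 0 (- x) = - RInt f 0 x.
Proof. intros C E x.
  assert (K := same_deriv (fun y => RInt f 0 (- y)) (fun y => - RInt f 0 y) (fun y => - f y) 0).
  apply K.
  - intros y. eapply is_derive_eq. apply (D_comp (fun z => RInt f 0 z) (fun z => - z)). apply D_prim, C.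
    apply (is_derive_opp (fun z => z) y 1), D_id. rewrite E. simpl. unfold opp; simpl. ring.
  - intros y. apply (is_derive_opp (fun z => RInt f 0 z) y (f y)). apply D_prim, C.
  - rewrite Ropp_0, RInt_point. simpl. unfold zero; simpl. ring. Qed.

Lemma prim_even f : Cn f -> (forall y, f (- y) = - f y) -> forall x, RInt f 0 (- x) = RInt f 0 x.
Proof. intros C E x.
  assert (K := same_deriv (fun y => RInt f 0 (- y)) (fun y => RInt f 0 y) (fun y => f y) 0).
  apply K.
  - intros y. eapply is_derive_eq. apply (D_comp (fun z => RInt f 0 z) (fun z => - z)). apply D_prim, C.
    apply (is_derive_opp (fun z => z) y 1), D_id. rewrite E. simpl. unfold opp; simpl. ring.
  - intros y. apply D_prim, C.
  - rewrite Ropp_0. reflexivity. Qed.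

Lemma exp_le a b : a <= b -> exp a <= exp b.
Proof. intros H; destruct (Rle_lt_or_eq_dec _ _ H) as [H'|H']. left; apply exp_increasing, H'. subst; lra. Qed.

Lemma RI_scal f k a b : ex_RInt f a b -> RInt (fun x => k * f x) a b = k * RInt f a b.
Proof. intros H. apply (RInt_scal (V:=R_CompleteNormedModule) f a b k H). Qed.
Lemma RI_plus f g a b : ex_RInt f a b -> ex_RInt g a b -> RInt (fun x => f x + g x) a b = RInt f a b + RInt g a b.
Proof. intros H1 H2. apply (RInt_plus (V:=R_CompleteNormedModule) f g a b H1 H2). Qed.
Lemma RI_minus f g a b : ex_RInt f a b -> ex_RInt g a b -> RInt (fun x => f x - g x) a b = RInt f a b - RInt g a b.
Proof. intros H1 H2. apply (RInt_minus (V:=R_CompleteNormedModule) f g a b H1 H2). Qed.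
Lemma RI_const c a b : RInt (fun _ => c) a b = (b - a) * c.
Proof. rewrite (RInt_const (V:=R_CompleteNormedModule)). reflexivity. Qed.
Lemma RI_Chasles f a b c : ex_RInt f a b -> ex_RInt f b c -> RInt f a b + RInt f b c = RInt f a c.
Proof. intros H1 H2. apply (RInt_Chasles (V:=R_CompleteNormedModule) f a b c H1 H2). Qed.
Lemma RI_ext f g a b : (forall x, Rmin a b < x < Rmax a b -> f x = g x) -> RInt f a b = RInt g a b.
Proof. intros H. apply (RInt_ext (V:=R_CompleteNormedModule)). exact H. Qed.
Lemma RI_point f a : RInt f a a = 0.
Proof. apply (RInt_point (V:=R_CompleteNormedModule)). Qed.

Definition Sg x := RInt (fun u => exp (- u ^ 2)) 0 x.

Lemma Cn_S : Cn Sg.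
Proof. apply Cn_prim, Cn_expmsq. Qed.
Lemma D_S x : is_derive Sg x (exp (- x ^ 2)).
Proof. apply (D_prim (fun u => exp (- u ^ 2))), Cn_expmsq. Qed.
Lemma S_0 : Sg 0 = 0.
Proof. apply RI_point. Qed.
Lemma S_odd x : Sg (- x) = - Sg x.
Proof. apply prim_odd. apply Cn_expmsq. intros; f_equal; ring. Qed.
Lemma S_mono a b : a <= b -> Sg a <= Sg b.
Proof. intros H. unfold Sg. rewrite <- (RI_Chasles _ 0 a b) by apply exRI, Cn_expmsq.
  assert (0 <= RInt (fun u => exp (- u ^ 2)) a b). apply RInt_ge_0; auto. apply exRI, Cn_expmsq.
  intros; left; apply exp_pos. lra. Qed.
Lemma S_nonneg x : 0 <= x -> 0 <= Sg x.
Proof. intros H. rewrite <- S_0. apply S_mono, H. Qed.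

Lemma S_absle x : Rabs (Sg x) <= Rabs x.
Proof. assert (K : forall x, 0 <= x -> Rabs (Sg x) <= Rabs x).
  { intros z Hz. unfold Sg. eapply Rle_trans. apply abs_RInt_le_const with (M := 1); auto.
    apply exRI, Cn_expmsq. intros t _. rewrite Rabs_pos_eq by (left; apply exp_pos).
    rewrite <- exp_0. apply exp_le. nra. rewrite Rabs_pos_eq; lra. }
  destruct (Rle_or_lt 0 x). apply K; auto.
  assert (K' := K (- x) ltac:(lra)). rewrite S_odd, !Rabs_Ropp in K'. exact K'. Qed.

Definition gk t r := exp (- (t ^ 2 * (1 + r ^ 2))) / (1 + r ^ 2).
Definition Gk t := RInt (gk t) 0 1.

Lemma pos1r r : 0 < 1 + r ^ 2.
Proof. nra. Qed.
Lemma neq1r r : 1 + r ^ 2 <> 0.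
Proof. generalize (pos1r r); lra. Qed.

Lemma c2_comp h (F : R -> R -> R) x y : Cn h -> continuity_2d_pt F x y ->
  continuity_2d_pt (fun u v => h (F u v)) x y.
Proof. intros Hh HF. apply continuity_2d_pt_filterlim. apply continuity_2d_pt_filterlim in HF.
  eapply filterlim_comp. apply HF. apply Hh. Qed.

Lemma Derive_gk u v : Derive (fun z => gk z v) u = -2 * u * exp (- (u ^ 2 * (1 + v ^ 2))).
Proof. apply is_derive_unique. unfold gk. auto_derive. easy. simpl. field.
  generalize (pos1r v); simpl; lra. Qed.

Lemma gk_aux (t r : R) : -2 * t * exp (- (t ^ 2 * (1 + r ^ 2))) = -2 * exp (- t ^ 2) * (t * exp (- (t * r + 0) ^ 2)).
Proof. replace (- (t ^ 2 * (1 + r ^ 2))) with (- t ^ 2 + - (t * r + 0) ^ 2) by ring.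
    rewrite exp_plus. ring. Qed.

Lemma D_Gk t : is_derive Gk t (-2 * exp (- t ^ 2) * Sg t).
Proof.
  eapply is_derive_eq. apply (is_derive_RInt_param gk 0 1 t).
  - apply filter_forall. intros x0 r _. unfold gk. auto_derive; try easy; try apply neq1r.
  - intros r _. apply continuity_2d_pt_ext with (f := fun u v => -2 * u * exp (- (u ^ 2 * (1 + v ^ 2)))).
    intros; rewrite Derive_gk; auto.
    apply continuity_2d_pt_mult. apply continuity_2d_pt_mult. apply continuity_2d_pt_const. apply continuity_2d_pt_id1.
    apply (c2_comp exp (fun u v => - (u ^ 2 * (1 + v ^ 2)))). intros z; apply continuous_exp.
    apply continuity_2d_pt_opp. apply continuity_2d_pt_mult.
    apply (c2_comp (fun z => z ^ 2) (fun u v => u)). apply Cn_der; intros; auto_derive; auto. apply continuity_2d_pt_id1.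
    apply continuity_2d_pt_plus. apply continuity_2d_pt_const.
    apply (c2_comp (fun z => z ^ 2) (fun u v => v)). apply Cn_der; intros; auto_derive; auto. apply continuity_2d_pt_id2.
  - apply filter_forall. intros y. apply exRI. apply Cn_der. intros z. unfold gk. auto_derive; try easy; try apply neq1r.
  - rewrite (RInt_ext _ (fun r => (-2 * exp (- t ^ 2)) * (t * exp (- (t * r + 0) ^ 2)))).
    rewrite RI_scal. f_equal. unfold Sg.
    transitivity (RInt (fun u => exp (- u ^ 2)) (t*0+0) (t*1+0)).
    rewrite <- (RInt_comp_lin (V:=R_CompleteNormedModule) (fun u => exp (- u ^ 2)) t 0 0 1).
    reflexivity. apply exRI, Cn_expmsq.
    replace (t * 0 + 0) with 0 by ring. replace (t * 1 + 0) with t by ring. reflexivity.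
    apply exRI. apply Cn_der; intros; auto_derive; auto.
    intros r _. rewrite Derive_gk. apply gk_aux.
Qed.

Lemma Gk_0 : Gk 0 = PI / 4.
Proof. unfold Gk, gk. rewrite (RI_ext _ (fun r => / (1 + r ^ 2))).
  rewrite (ftc atan). rewrite atan_1, atan_0. lra.
  intros x. apply is_derive_Reals, derivable_pt_lim_atan.
  apply Cn_der. intros; auto_derive; apply neq1r.
  intros x _. replace (- (0 ^ 2 * (1 + x ^ 2))) with 0 by ring. rewrite exp_0. unfold Rdiv; ring. Qed.

Lemma S2G t : Sg t ^ 2 + Gk t = PI / 4.
Proof. rewrite <- Gk_0. replace (Gk 0) with (Sg 0 ^ 2 + Gk 0) by (rewrite S_0; ring).
  apply (const_of_D0 (fun t => Sg t ^ 2 + Gk t)). intros x.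
  eapply is_derive_eq. apply D_plus. apply (D_comp (fun z => z ^ 2) Sg). 2: apply D_S.
  2: apply D_Gk. auto_derive; auto. simpl. ring. Qed.

Lemma Gk_bounds t : 0 <= Gk t <= exp (- t ^ 2).
Proof. unfold Gk. assert (ex : ex_RInt (gk t) 0 1).
  { apply exRI, Cn_der. intros; unfold gk; auto_derive; apply neq1r. }
  split.
  - apply RInt_ge_0; auto. lra. intros r _. unfold gk. apply Rdiv_le_0_compat. left; apply exp_pos. apply pos1r.
  - apply Rle_trans with (RInt (fun _ => exp (- t ^ 2)) 0 1). 2: rewrite RI_const; lra.
    apply RInt_le; auto. lra. apply exRI, Cn_const.
    intros r _. unfold gk. apply Rle_trans with (exp (- (t ^ 2 * (1 + r ^ 2)))).
    unfold Rdiv. rewrite <- (Rmult_1_r (exp _)) at 2. apply Rmult_le_compat_l. left; apply exp_pos.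
    rewrite <- Rinv_1. apply Rinv_le_contravar. lra. nra.
    apply exp_le. nra. Qed.

Lemma sqrtPI_sq : sqrt PI * sqrt PI = PI.
Proof. apply sqrt_sqrt. generalize PI_RGT_0; lra. Qed.
Lemma sqrtPI_ge1 : 1 <= sqrt PI.
Proof. rewrite <- sqrt_1. apply sqrt_le_1_alt. generalize PI2_1; lra. Qed.

Lemma S_bound t : Rabs (Sg t) <= sqrt PI / 2.
Proof. assert (H := S2G t). assert (H2 := Gk_bounds t). assert (H3 := sqrtPI_sq). assert (H4 := sqrtPI_ge1).
  apply Rabs_le. split; nra. Qed.

Definition Eg x := sqrt PI / 2 - Sg x.

Lemma E_bound x : 0 <= x -> 0 <= Eg x <= 2 * exp (- x ^ 2).
Proof. intros Hx. unfold Eg. assert (H := S2G x). assert (H2 := Gk_bounds x). assert (H3 := sqrtPI_sq).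
  assert (H4 := sqrtPI_ge1). assert (H5 := S_nonneg x Hx). assert (H6 := S_bound x).
  apply Rabs_le_between in H6. split. lra.
  assert ((sqrt PI / 2 - Sg x) * (sqrt PI / 2 + Sg x) <= exp (- x ^ 2)) by nra. nra. Qed.

Lemma E_decr a b : a <= b -> Eg b <= Eg a.
Proof. intros H; unfold Eg; generalize (S_mono a b H); lra. Qed.

Lemma Cn_E : Cn Eg.
Proof. apply Cn_minus. apply Cn_const. apply Cn_S. Qed.
Lemma D_E x : is_derive Eg x (- exp (- x ^ 2)).
Proof. eapply is_derive_eq. apply D_minus. apply D_const. apply D_S. ring. Qed.

Lemma expm_le_inv x : 0 < x -> exp (- x ^ 2) <= / x.
Proof. intros Hx. assert (H := exp_ineq1_le (x ^ 2)).
  assert (exp (x^2) * exp (- x ^ 2) = 1) by (rewrite <- exp_plus; replace (x^2 + - x^2) with 0 by ring; apply exp_0).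
  assert (0 < exp (- x ^ 2)) by apply exp_pos.
  apply (Rmult_le_reg_l x); auto. rewrite Rinv_r by lra. nra. Qed.

Lemma zero_of_small c K : (forall a, 0 < a <= 1 -> Rabs c <= K * a) -> c = 0.
Proof. intros H. destruct (Req_dec c 0) as [|Hc]; auto. exfalso.
  assert (Hc' : 0 < Rabs c) by (apply Rabs_pos_lt; auto).
  assert (HK : 0 < K). { specialize (H 1 ltac:(lra)). lra. }
  set (a := Rmin 1 (Rabs c / (2 * K))).
  assert (Ha : 0 < a <= 1). { unfold a. split. apply Rmin_pos. lra. apply Rdiv_lt_0_compat; lra. apply Rmin_l. }
  specialize (H a Ha). assert (a <= Rabs c / (2 * K)) by apply Rmin_r.
  assert (K * a <= K * (Rabs c / (2 * K))) by (apply Rmult_le_compat_l; lra).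
  replace (K * (Rabs c / (2 * K))) with (Rabs c / 2) in H1 by (field; lra). lra. Qed.

Lemma zero_of_large c K : (forall y, 1 <= y -> Rabs c <= K / y) -> c = 0.
Proof. intros H. apply (zero_of_small c K). intros a Ha. specialize (H (/ a)).
  rewrite Rdiv_def, Rinv_inv in H. apply H. rewrite <- Rinv_1. apply Rinv_le_contravar; lra. Qed.

Lemma IG f (G : R -> R) y L : (forall a, is_RInt f a y (G y - G a)) ->
  (forall eps, 0 < eps -> exists M, forall a, a < M -> Rabs (G a - L) < eps) ->
  RInt_gen f (Rbar_locally m_infty) (at_point y) = G y - L.
Proof. intros HI HL. apply (is_RInt_gen_unique (V:=R_CompleteNormedModule)).
  intros P [eps Heps]. destruct (HL eps (cond_pos eps)) as [M HM].
  apply (Filter_prod _ _ _ (fun a => a < M) (fun b => b = y)).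
  exists M; auto. reflexivity.
  intros a b Ha ->. exists (G y - G a). split. apply HI. apply Heps.
  change (Rabs ((G y - G a) - (G y - L)) < eps).
  replace ((G y - G a) - (G y - L)) with (- (G a - L)) by ring. rewrite Rabs_Ropp. auto. Qed.

Lemma lim_of_bound (G : R -> R) L K : (forall a, a <= -1 -> Rabs (G a - L) <= K / (- a)) ->
  forall eps, 0 < eps -> exists M, forall a, a < M -> Rabs (G a - L) < eps.
Proof. intros H eps Heps. exists (Rmin (-1) (- (Rabs K + 1) / eps)). intros a Ha.
  assert (a < -1) by (eapply Rlt_le_trans; [apply Ha|apply Rmin_l]).
  assert (a < - (Rabs K + 1) / eps) by (eapply Rlt_le_trans; [apply Ha|apply Rmin_r]).
  eapply Rle_lt_trans. apply H. lra.
  assert (Rabs K + 1 < eps * (- a)). { apply (Rmult_lt_compat_l eps) in H1; auto.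
    replace (eps * (- (Rabs K + 1) / eps)) with (- (Rabs K + 1)) in H1 by (field; lra). lra. }
  apply (Rmult_lt_reg_r (- a)). lra. unfold Rdiv. rewrite Rmult_assoc, Rinv_l by lra.
  generalize (Rle_abs K). lra. Qed.

Definition Fg x := Sg x + sqrt PI / 2.
Lemma Fg_Eg x : Fg x = Eg (- x).
Proof. unfold Fg, Eg. rewrite S_odd. ring. Qed.

Lemma RIgen_gauss (f : R -> R) y : (forall u, exp (- u ^ 2) = f u) -> RInt_gen f (Rbar_locally m_infty) (at_point y) = Fg y.
Proof. intros Hf. unfold Fg. replace (Sg y + sqrt PI / 2) with (Sg y - (- (sqrt PI / 2))) by ring.
  apply IG.
  - intros a. apply (is_RInt_ext (V:=R_NormedModule) (fun u => exp (- u ^ 2))). intros; apply Hf.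
    apply (is_RInt_derive Sg (fun u => exp (- u ^ 2))). intros; apply D_S. intros; apply Cn_expmsq.
  - apply (lim_of_bound _ _ 2). intros a Ha.
    replace (Sg a - - (sqrt PI / 2)) with (Eg (- a)) by (unfold Eg; rewrite S_odd; ring).
    destruct (E_bound (- a)) as [H1 H2]. lra. rewrite Rabs_pos_eq by lra.
    eapply Rle_trans. apply H2. unfold Rdiv. apply Rmult_le_compat_l. lra. apply expm_le_inv. lra. Qed.

Definition gg y := exp (y ^ 2) * Fg y.
Lemma Cn_Fg : Cn Fg.
Proof. apply Cn_plus. apply Cn_S. apply Cn_const. Qed.
Lemma Cn_gg : Cn gg.
Proof. apply Cn_mult. apply Cn_expsq. apply Cn_Fg. Qed.

Lemma chi1_eq z : chi 1 z = 2 * RInt gg 0 z.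
Proof. cbn [chi]. apply Rmult_eq_compat_l. apply RI_ext. intros x _.
  rewrite RIgen_gauss. reflexivity. intros; ring. Qed.

Lemma chi1_formula z : chi 1 z = sqrt PI * phi1 z + psi1 z.
Proof. rewrite chi1_eq. unfold phi1, psi1, gg, Fg.
  rewrite (RI_ext _ (fun y => exp (y ^ 2) * Sg y + (sqrt PI / 2) * exp (y ^ 2))).
  rewrite RI_plus, RI_scal. unfold Sg. field.
  apply exRI, Cn_expsq. apply exRI, Cn_mult. apply Cn_expsq. apply Cn_S. apply exRI, Cn_scal, Cn_expsq.
  intros; ring. Qed.

Lemma expm_inv1 y : 0 < y -> exp (- y) <= / y.
Proof. intros Hy. assert (H := exp_ineq1_le y).
  assert (exp y * exp (- y) = 1) by (rewrite <- exp_plus; replace (y + - y) with 0 by ring; apply exp_0).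
  assert (0 < exp (- y)) by apply exp_pos.
  apply (Rmult_le_reg_l y); auto. rewrite Rinv_r by lra. nra. Qed.

Lemma expm_inv2 y : 0 < y -> exp (- y) <= 4 / y ^ 2.
Proof. intros Hy. assert (H := exp_ineq1_le (y / 2)).
  assert (exp (y/2) * exp (y/2) * exp (- y) = 1) by (rewrite <- !exp_plus; replace (y/2 + y/2 + - y) with 0 by field; apply exp_0).
  assert (0 < exp (- y)) by apply exp_pos.
  assert (0 < exp (y/2)) by apply exp_pos.
  apply (Rmult_le_reg_l (y ^ 2)). nra. unfold Rdiv. rewrite <- Rmult_assoc, (Rmult_comm _ 4), Rmult_assoc, Rinv_r by nra.
  nra. Qed.

Lemma loc_neq0 r : r <> 0 -> locally r (fun y => y <> 0).
Proof. intros Hr. assert (Hp : 0 < Rabs r) by (apply Rabs_pos_lt; auto).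
  exists (mkposreal _ Hp). intros y Hy. change (Rabs (y - r) < Rabs r) in Hy. intros ->.
  rewrite Rminus_0_l, Rabs_Ropp in Hy. lra. Qed.

Lemma loc2_neq0 x r : r <> 0 -> locally_2d (fun u v => v <> 0) x r.
Proof. intros Hr. assert (Hp : 0 < Rabs r) by (apply Rabs_pos_lt; auto).
  exists (mkposreal _ Hp). intros u v _ Hv. simpl in Hv. intros ->.
  rewrite Rminus_0_l, Rabs_Ropp in Hv. lra. Qed.

Lemma cont0_of_bound f K : f 0 = 0 -> (forall r, Rabs r <= 1 -> Rabs (f r) <= K * Rabs r) -> continuous f 0.
Proof. intros H0 HK. apply (continuity_pt_filterlim f 0). intros eps Heps.
  assert (HK0 : 0 <= K). { specialize (HK 1). rewrite Rabs_R1 in HK. generalize (Rabs_pos (f 1)). specialize (HK ltac:(lra)). lra. }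
  exists (Rmin 1 (eps / (K + 1))). split. apply Rmin_pos. lra. apply Rdiv_lt_0_compat; lra.
  intros r [_ Hr]. simpl in Hr |- *. unfold R_dist in *. rewrite H0, !Rminus_0_r in *.
  assert (Rabs r < 1) by (eapply Rlt_le_trans; [apply Hr|apply Rmin_l]).
  assert (Rabs r < eps / (K + 1)) by (eapply Rlt_le_trans; [apply Hr|apply Rmin_r]).
  eapply Rle_lt_trans. apply HK. lra.
  apply Rle_lt_trans with ((K + 1) * Rabs r). generalize (Rabs_pos r); nra.
  apply (Rmult_lt_compat_l (K + 1)) in H1; [|lra]. replace ((K + 1) * (eps / (K + 1))) with eps in H1 by (field; lra). lra. Qed.

Lemma c2_zero (F : R -> R -> R) x K : 0 < x -> (forall u, F u 0 = 0) ->
  (forall u v, Rabs (u - x) < x / 2 -> Rabs v <= 1 -> Rabs (F u v) <= K * Rabs v) ->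
  continuity_2d_pt F x 0.
Proof. intros Hx H0 HK eps.
  assert (HK0 : 0 <= K). { specialize (HK x 1). rewrite Rabs_R1 in HK. generalize (Rabs_pos (F x 1)).
    replace (x - x) with 0 in HK by ring. rewrite Rabs_R0 in HK. specialize (HK ltac:(lra) ltac:(lra)). lra. }
  assert (Hd : 0 < Rmin (x / 2) (Rmin 1 (eps / (K + 1)))).
  { apply Rmin_pos. lra. apply Rmin_pos. lra. apply Rdiv_lt_0_compat. apply cond_pos. lra. }
  exists (mkposreal _ Hd). intros u v Hu Hv. simpl in Hu, Hv. rewrite H0, Rminus_0_r. rewrite Rminus_0_r in Hv.
  assert (Rabs (u - x) < x / 2) by (eapply Rlt_le_trans; [apply Hu|apply Rmin_l]).
  assert (Rabs v < 1) by (eapply Rlt_le_trans; [apply Hv| eapply Rle_trans; [apply Rmin_r|apply Rmin_l]]).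
  assert (Rabs v < eps / (K + 1)) by (eapply Rlt_le_trans; [apply Hv| eapply Rle_trans; [apply Rmin_r|apply Rmin_r]]).
  eapply Rle_lt_trans. apply HK; lra.
  apply Rle_lt_trans with ((K + 1) * Rabs v). generalize (Rabs_pos v); nra.
  apply (Rmult_lt_compat_l (K + 1)) in H2; [|lra]. replace ((K + 1) * (eps / (K + 1))) with (pos eps) in H2 by (field; lra). lra. Qed.

Definition hK x r := if Req_dec_T r 0 then 0 else exp (- (x / r) ^ 2) / r ^ 2.
Definition dK x r := if Req_dec_T r 0 then 0 else exp (- (x / r) ^ 2) / (1 + r ^ 2).
Definition ddK x r := if Req_dec_T r 0 then 0 else -2 * x * (exp (- (x / r) ^ 2) / r ^ 2) / (1 + r ^ 2).

Lemma hK_0 x : hK x 0 = 0.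
Proof. unfold hK; destruct (Req_dec_T 0 0); [reflexivity|lra]. Qed.
Lemma dK_0 x : dK x 0 = 0.
Proof. unfold dK; destruct (Req_dec_T 0 0); [reflexivity|lra]. Qed.
Lemma ddK_0 x : ddK x 0 = 0.
Proof. unfold ddK; destruct (Req_dec_T 0 0); [reflexivity|lra]. Qed.
Lemma hK_nz x r : r <> 0 -> hK x r = exp (- (x / r) ^ 2) / r ^ 2.
Proof. intros H; unfold hK; destruct (Req_dec_T r 0); [contradiction|reflexivity]. Qed.
Lemma dK_nz x r : r <> 0 -> dK x r = exp (- (x / r) ^ 2) / (1 + r ^ 2).
Proof. intros H; unfold dK; destruct (Req_dec_T r 0); [contradiction|reflexivity]. Qed.
Lemma ddK_nz x r : r <> 0 -> ddK x r = -2 * x * (exp (- (x / r) ^ 2) / r ^ 2) / (1 + r ^ 2).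
Proof. intros H; unfold ddK; destruct (Req_dec_T r 0); [contradiction|reflexivity]. Qed.

Lemma ddK_hK x r : ddK x r = -2 * x * (hK x r - dK x r).
Proof. destruct (Req_dec r 0) as [->|Hr]. rewrite ddK_0, hK_0, dK_0. ring.
  rewrite ddK_nz, hK_nz, dK_nz by auto. field. split. apply neq1r. auto. Qed.

Lemma sq_pos x : x <> 0 -> 0 < x ^ 2.
Proof. intros H. destruct (Rlt_or_le x 0). nra. destruct H0. nra. lra. Qed.

Lemma hK_bound x r : x <> 0 -> 0 <= hK x r <= 4 / x ^ 4 * r ^ 2.
Proof. intros Hx. destruct (Req_dec r 0) as [->|Hr]. rewrite hK_0. split. lra. 
  assert (0 < x ^ 2) by (apply sq_pos; auto). replace (x ^ 4) with ((x^2)^2) by ring. 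
  apply Rmult_le_pos. unfold Rdiv. apply Rmult_le_pos. lra. left; apply Rinv_0_lt_compat. nra. nra.
  rewrite hK_nz by auto. assert (0 < r ^ 2) by nra. assert (0 < (x / r) ^ 2).
  { apply sq_pos. unfold Rdiv. apply Rmult_integral_contrapositive_currified; auto. apply Rinv_neq_0_compat; auto. }
  split. unfold Rdiv; apply Rmult_le_pos. left; apply exp_pos. left; apply Rinv_0_lt_compat; auto.
  apply Rle_trans with (4 / ((x / r) ^ 2) ^ 2 / r ^ 2).
  unfold Rdiv. apply Rmult_le_compat_r. left; apply Rinv_0_lt_compat; auto. apply expm_inv2; auto.
  right. field. auto.
Qed.

Lemma dK_bound x r : x <> 0 -> 0 <= dK x r <= r ^ 2 / x ^ 2.
Proof. intros Hx. assert (0 < x ^ 2) by (apply sq_pos; auto).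
  destruct (Req_dec r 0) as [->|Hr]. rewrite dK_0. split. lra. unfold Rdiv. simpl. nra.
  rewrite dK_nz by auto. assert (0 < r ^ 2) by (apply sq_pos; auto). assert (Hxr : 0 < (x / r) ^ 2).
  { apply sq_pos. unfold Rdiv. apply Rmult_integral_contrapositive_currified; auto. apply Rinv_neq_0_compat; auto. }
  assert (0 < exp (- (x / r) ^ 2)) by apply exp_pos. assert (Hp1 := pos1r r).
  split. unfold Rdiv; apply Rmult_le_pos. lra. left; apply Rinv_0_lt_compat; auto.
  apply Rle_trans with (exp (- (x / r) ^ 2)).
  unfold Rdiv. rewrite <- (Rmult_1_r (exp _)) at 2. apply Rmult_le_compat_l. lra.
  rewrite <- Rinv_1. apply Rinv_le_contravar. lra. lra.
  eapply Rle_trans. apply expm_inv1; auto. right. field. auto. Qed.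

Lemma dK_le1 x r : 0 <= dK x r <= 1.
Proof. destruct (Req_dec r 0) as [->|Hr]. rewrite dK_0. lra.
  rewrite dK_nz by auto. assert (H1 := pos1r r). assert (0 < exp (- (x / r) ^ 2)) by apply exp_pos.
  assert (exp (- (x / r) ^ 2) <= 1) by (rewrite <- exp_0; apply exp_le; nra).
  split. unfold Rdiv; apply Rmult_le_pos. lra. left; apply Rinv_0_lt_compat; auto.
  apply Rle_trans with (exp (- (x / r) ^ 2)).
  unfold Rdiv. rewrite <- (Rmult_1_r (exp _)) at 2. apply Rmult_le_compat_l. lra.
  rewrite <- Rinv_1. apply Rinv_le_contravar. lra. nra. lra. Qed.

Lemma ddK_bound x r : x <> 0 -> Rabs (ddK x r) <= 8 * Rabs x / x ^ 4 * r ^ 2.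
Proof. intros Hx. assert (H := hK_bound x r Hx). destruct (Req_dec r 0) as [->|Hr].
  rewrite ddK_0, Rabs_R0. apply Rmult_le_pos. unfold Rdiv. apply Rmult_le_pos. generalize (Rabs_pos x); lra.
  left; apply Rinv_0_lt_compat. replace (x^4) with ((x^2)^2) by ring. generalize (sq_pos x Hx); nra. nra.
  assert (Hd : ddK x r = -2 * x * hK x r / (1 + r ^ 2)).
  { rewrite ddK_nz, hK_nz by auto. field. split; auto. apply neq1r. }
  rewrite Hd. unfold Rdiv. rewrite !Rabs_mult, Rabs_Rinv by apply neq1r.
  rewrite (Rabs_pos_eq (1 + r^2)) by (generalize (pos1r r); lra). rewrite (Rabs_pos_eq (hK x r)) by lra.
  replace (Rabs (-2)) with 2 by (rewrite Rabs_left; lra).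
  assert (0 < / (1 + r ^ 2) <= 1). { split. apply Rinv_0_lt_compat, pos1r. rewrite <- Rinv_1. apply Rinv_le_contravar. lra. nra. }
  assert (0 <= Rabs x) by apply Rabs_pos.
  apply Rle_trans with (2 * Rabs x * hK x r). rewrite <- (Rmult_1_r (2 * Rabs x * hK x r)) at 2.
  apply Rmult_le_compat_l. apply Rmult_le_pos; lra. lra.
  apply Rle_trans with (2 * Rabs x * (4 / x ^ 4 * r ^ 2)). apply Rmult_le_compat_l; lra.
  right. unfold Rdiv. ring. Qed.

Lemma D_ext f g x l : (forall t, f t = g t) -> is_derive f x l -> is_derive g x l.
Proof. intros H. apply (is_derive_ext (K:=R_AbsRing) (V:=R_NormedModule) f g x l H). Qed.

Definition vK x r := r * Sg (x / r) / (1 + r ^ 2).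

Lemma D_vK r z : is_derive (fun z => vK z r) z (dK z r).
Proof. destruct (Req_dec r 0) as [->|Hr].
  - rewrite dK_0. apply (D_ext (fun _ => 0)). intros; unfold vK; simpl. unfold Rdiv; ring. apply D_const.
  - rewrite dK_nz by auto. apply (D_ext (fun z => (r / (1 + r ^ 2)) * Sg (z / r))).
    intros; unfold vK; unfold Rdiv; ring.
    eapply is_derive_eq. apply D_scal. apply (D_comp Sg (fun z => z / r)). apply D_S.
    auto_derive; auto. field. split; auto. apply neq1r. Qed.

Lemma D_dK r z : is_derive (fun z => dK z r) z (ddK z r).
Proof. destruct (Req_dec r 0) as [->|Hr].
  - rewrite ddK_0. apply (D_ext (fun _ => 0)). intros; rewrite dK_0; auto. apply D_const.
  - rewrite ddK_nz by auto. apply (D_ext (fun z => exp (- (z / r) ^ 2) / (1 + r ^ 2))).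
    intros; rewrite dK_nz; auto.
    auto_derive. auto. unfold Rdiv; simpl. field. split; auto. generalize (pos1r r); simpl; lra. Qed.

Lemma abs_le_sq r : Rabs r <= 1 -> r ^ 2 <= Rabs r.
Proof. intros H. rewrite <- (Rabs_pos_eq (r^2)) by nra. rewrite <- RPow_abs. simpl.
  generalize (Rabs_pos r); nra. Qed.

Lemma cont_dK_r x r0 : x <> 0 -> continuous (dK x) r0.
Proof. intros Hx. destruct (Req_dec r0 0) as [->|Hr].
  - apply (cont0_of_bound _ (/ x ^ 2)). apply dK_0. intros r Hr.
    destruct (dK_bound x r Hx). rewrite Rabs_pos_eq by lra. eapply Rle_trans. apply H0.
    unfold Rdiv. rewrite Rmult_comm. apply Rmult_le_compat_l. left; apply Rinv_0_lt_compat, sq_pos; auto.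
    apply abs_le_sq; auto.
  - apply (continuous_ext_loc (dK x) (fun r => exp (- (x / r) ^ 2) / (1 + r ^ 2))).
    generalize (loc_neq0 r0 Hr). apply filter_imp. intros y Hy. rewrite dK_nz; auto.
    apply (ex_derive_continuous (K:=R_AbsRing) (V:=R_NormedModule)). auto_derive. split; auto. split; auto. apply neq1r. Qed.

Lemma cont_hK_r x r0 : x <> 0 -> continuous (hK x) r0.
Proof. intros Hx. destruct (Req_dec r0 0) as [->|Hr].
  - apply (cont0_of_bound _ (4 / x ^ 4)). apply hK_0. intros r Hr.
    destruct (hK_bound x r Hx). rewrite Rabs_pos_eq by lra. eapply Rle_trans. apply H0.
    apply Rmult_le_compat_l. unfold Rdiv. apply Rmult_le_pos. lra. left; apply Rinv_0_lt_compat.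
    replace (x^4) with ((x^2)^2) by ring. generalize (sq_pos x Hx); nra.
    apply abs_le_sq; auto.
  - apply (continuous_ext_loc (hK x) (fun r => exp (- (x / r) ^ 2) / r ^ 2)).
    generalize (loc_neq0 r0 Hr). apply filter_imp. intros y Hy. rewrite hK_nz; auto.
    apply (ex_derive_continuous (K:=R_AbsRing) (V:=R_NormedModule)). auto_derive; repeat split; try assumption; try (generalize (sq_pos r0 Hr); simpl; lra). Qed.

Lemma cont_vK_r x r0 : continuous (vK x) r0.
Proof. destruct (Req_dec r0 0) as [->|Hr].
  - apply (cont0_of_bound _ (sqrt PI / 2)). unfold vK; unfold Rdiv; ring. intros r Hr.
    unfold vK. unfold Rdiv. rewrite !Rabs_mult, Rabs_Rinv by apply neq1r.
    rewrite (Rabs_pos_eq (1 + r^2)) by (generalize (pos1r r); lra).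
    assert (0 < / (1 + r ^ 2) <= 1). { split. apply Rinv_0_lt_compat, pos1r. rewrite <- Rinv_1. apply Rinv_le_contravar. lra. nra. }
    assert (H1 := S_bound (x * / r)). assert (0 <= Rabs r) by apply Rabs_pos. assert (0 <= Rabs (Sg (x * / r))) by apply Rabs_pos.
    apply Rle_trans with (Rabs r * Rabs (Sg (x * / r))). rewrite <- (Rmult_1_r (Rabs r * _)) at 2.
    apply Rmult_le_compat_l. nra. lra. rewrite Rmult_comm. apply Rmult_le_compat_r; lra.
  - apply (ex_derive_continuous (K:=R_AbsRing) (V:=R_NormedModule)). eexists.
    apply (D_ext (fun r => (r / (1 + r ^ 2)) * Sg (x / r))). intros; unfold vK, Rdiv; ring.
    apply D_mult. auto_derive. apply neq1r. reflexivity.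
    apply (D_comp Sg (fun r => x / r)). apply D_S. auto_derive. auto. reflexivity. Qed.

Lemma c2_sq (F : R -> R -> R) x y : continuity_2d_pt F x y -> continuity_2d_pt (fun u v => (F u v) ^ 2) x y.
Proof. intros H. apply (c2_comp (fun z => z ^ 2) F). apply Cn_der; intros; auto_derive; auto. auto. Qed.

Lemma c2_expm (F : R -> R -> R) x y : continuity_2d_pt F x y -> continuity_2d_pt (fun u v => exp (- (F u v) ^ 2)) x y.
Proof. intros H. apply (c2_comp (fun z => exp (- z ^ 2)) F). apply Cn_expmsq. auto. Qed.

Lemma c2_udv x t : t <> 0 -> continuity_2d_pt (fun u v => u * / v) x t.
Proof. intros Ht. apply continuity_2d_pt_mult. apply continuity_2d_pt_id1.
  apply (continuity_2d_pt_inv (fun u v => v)). apply continuity_2d_pt_id2. auto. Qed.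

Lemma c2_inv1 x t : continuity_2d_pt (fun u v => / (1 + v ^ 2)) x t.
Proof. apply (continuity_2d_pt_inv (fun u v => 1 + v ^ 2)). apply continuity_2d_pt_plus.
  apply continuity_2d_pt_const. apply (c2_sq (fun u v => v)). apply continuity_2d_pt_id2. apply neq1r. Qed.

Lemma cont2_dK x t : 0 < x -> continuity_2d_pt dK x t.
Proof. intros Hx. destruct (Req_dec t 0) as [->|Ht].
  - apply (c2_zero dK x (4 / x ^ 2)); auto. apply dK_0. intros u v Hu Hv.
    assert (Hu' : x / 2 < u) by (apply Rabs_def2 in Hu; lra).
    destruct (dK_bound u v) as [H1 H2]. lra. rewrite Rabs_pos_eq by lra. eapply Rle_trans. apply H2.
    assert (v ^ 2 <= Rabs v) by (apply abs_le_sq; auto).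
    assert (x ^ 2 / 4 <= u ^ 2) by nra.
    apply Rle_trans with (v ^ 2 / (x ^ 2 / 4)). unfold Rdiv. apply Rmult_le_compat_l. nra.
    apply Rinv_le_contravar. nra. auto.
    replace (v ^ 2 / (x ^ 2 / 4)) with (4 / x ^ 2 * v ^ 2) by (field; lra). apply Rmult_le_compat_l; auto.
    unfold Rdiv; apply Rmult_le_pos. lra. left; apply Rinv_0_lt_compat; nra.
  - apply (continuity_2d_pt_ext_loc (fun u v => exp (- (u * / v) ^ 2) * / (1 + v ^ 2))).
    generalize (loc2_neq0 x t Ht). unfold locally_2d. intros [d Hd]. exists d. intros u v H1 H2.
    rewrite dK_nz. reflexivity. apply (Hd u v H1 H2).
    apply continuity_2d_pt_mult. apply (c2_expm (fun u v => u * / v)). apply c2_udv; auto. apply c2_inv1. Qed.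

Lemma cont2_ddK x t : 0 < x -> continuity_2d_pt ddK x t.
Proof. intros Hx. destruct (Req_dec t 0) as [->|Ht].
  - apply (c2_zero ddK x (64 / x ^ 3)); auto. apply ddK_0. intros u v Hu Hv.
    assert (Hu' : x / 2 < u) by (apply Rabs_def2 in Hu; lra).
    eapply Rle_trans. apply ddK_bound. lra.
    assert (v ^ 2 <= Rabs v) by (apply abs_le_sq; auto).
    rewrite Rabs_pos_eq by lra.
    assert (x ^ 3 / 8 <= u ^ 3) by (apply Rle_trans with ((x/2)^3); [right; field| apply pow_incr; lra]).
    assert (8 * u / u ^ 4 <= 64 / x ^ 3).
    { replace (8 * u / u ^ 4) with (8 / u ^ 3) by (field; lra).
      replace (64 / x ^ 3) with (8 / (x ^ 3 / 8)) by (field; lra).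
      unfold Rdiv. apply Rmult_le_compat_l. lra. apply Rinv_le_contravar. apply Rdiv_lt_0_compat. apply pow_lt; lra. lra. auto. }
    assert (0 <= 8 * u / u ^ 4) by (unfold Rdiv; apply Rmult_le_pos; [lra| left; apply Rinv_0_lt_compat, pow_lt; lra]).
    apply Rle_trans with (64 / x ^ 3 * v ^ 2). apply Rmult_le_compat_r; auto. nra.
    apply Rmult_le_compat_l; auto. unfold Rdiv; apply Rmult_le_pos. lra. left; apply Rinv_0_lt_compat, pow_lt; lra.
  - apply (continuity_2d_pt_ext_loc (fun u v => -2 * u * (exp (- (u * / v) ^ 2) * / (v ^ 2)) * / (1 + v ^ 2))).
    generalize (loc2_neq0 x t Ht). unfold locally_2d. intros [d Hd]. exists d. intros u v H1 H2.
    rewrite ddK_nz. reflexivity. apply (Hd u v H1 H2).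
    apply continuity_2d_pt_mult. apply continuity_2d_pt_mult. apply continuity_2d_pt_mult.
    apply continuity_2d_pt_const. apply continuity_2d_pt_id1.
    apply continuity_2d_pt_mult. apply (c2_expm (fun u v => u * / v)). apply c2_udv; auto.
    apply (continuity_2d_pt_inv (fun u v => v ^ 2)). apply (c2_sq (fun u v => v)). apply continuity_2d_pt_id2.
    generalize (sq_pos t Ht); lra. apply c2_inv1. Qed.

Lemma exRI_minus f g a b : ex_RInt f a b -> ex_RInt g a b -> ex_RInt (fun x => f x - g x) a b.
Proof. intros H1 H2. apply (ex_RInt_minus (V:=R_NormedModule) f g a b H1 H2). Qed.

Lemma hK_int x : 0 < x -> RInt (hK x) 0 1 = Eg x / x.
Proof. intros Hx. assert (Hx0 : x <> 0) by lra.
  assert (ex : forall a b, ex_RInt (hK x) a b) by (intros; apply exRI; intros z; apply cont_hK_r; auto).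
  assert (Z := zero_of_small (RInt (hK x) 0 1 - Eg x / x) (4 / x ^ 4 + 2 / x ^ 3)).
  enough (RInt (hK x) 0 1 - Eg x / x = 0) by lra. apply Z. intros a Ha.
  rewrite <- (RI_Chasles _ 0 a 1) by auto.
  assert (Hint : RInt (hK x) a 1 = Eg x / x - Eg (x / a) / x).
  { apply is_RInt_unique.
    assert (K := is_RInt_derive (fun r => Eg (x / r) / x) (hK x) a 1).
    rewrite Rmin_left, Rmax_right in K by lra. replace (x / 1) with x in K by field.
    apply K.
    - intros r Hr. rewrite hK_nz by lra.
      apply (D_ext (fun r => / x * Eg (x / r))). intros; unfold Rdiv; ring.
      eapply is_derive_eq. apply D_scal. apply (D_comp Eg (fun r => x / r)). apply D_E.
      auto_derive. lra. reflexivity. unfold Rdiv; simpl. field. lra.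
    - intros r _. apply cont_hK_r; auto. }
  rewrite Hint.
  replace (RInt (hK x) 0 a + (Eg x / x - Eg (x / a) / x) - Eg x / x) with (RInt (hK x) 0 a - Eg (x / a) / x) by ring.
  eapply Rle_trans. apply Rabs_triang. rewrite Rabs_Ropp. rewrite Rmult_plus_distr_r. apply Rplus_le_compat.
  - eapply Rle_trans. apply abs_RInt_le_const with (M := 4 / x ^ 4). lra. auto.
    intros t Ht. destruct (hK_bound x t Hx0). rewrite Rabs_pos_eq by lra. eapply Rle_trans. apply H0.
    rewrite <- (Rmult_1_r (4 / x ^ 4)) at 2. apply Rmult_le_compat_l.
    unfold Rdiv; apply Rmult_le_pos. lra. left; apply Rinv_0_lt_compat, pow_lt; lra. nra. lra.
  - assert (Hxa : 0 < x / a) by (apply Rdiv_lt_0_compat; lra).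
    destruct (E_bound (x / a)) as [H1 H2]. lra.
    assert (exp (- (x / a) ^ 2) <= / (x / a) ^ 2) by (apply expm_inv1; apply pow_lt; lra).
    unfold Rdiv at 1. rewrite Rabs_mult, Rabs_pos_eq by lra. rewrite Rabs_pos_eq by (left; apply Rinv_0_lt_compat; lra).
    apply Rle_trans with (2 * / (x / a) ^ 2 * / x). apply Rmult_le_compat_r. left; apply Rinv_0_lt_compat; lra. lra.
    replace (2 * / (x / a) ^ 2 * / x) with (2 / x ^ 3 * (a * a)) by (field; lra).
    apply Rmult_le_compat_l. unfold Rdiv; apply Rmult_le_pos. lra. left; apply Rinv_0_lt_compat, pow_lt; lra. nra. Qed.

Definition Dd x := RInt (dK x) 0 1.

Lemma Dd_bound x : x <> 0 -> 0 <= Dd x <= 1.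
Proof. intros Hx. assert (ex : ex_RInt (dK x) 0 1) by (apply exRI; intros z; apply cont_dK_r; auto).
  unfold Dd. split. apply RInt_ge_0; auto. lra. intros; apply dK_le1.
  apply Rle_trans with (RInt (fun _ => 1) 0 1). apply RInt_le; auto. lra. apply exRI, Cn_const.
  intros; apply dK_le1. rewrite RI_const. lra. Qed.

Lemma D_Dd x : 0 < x -> is_derive Dd x (-2 * x * (Eg x / x - Dd x)).
Proof. intros Hx. eapply is_derive_eq. apply (is_derive_RInt_param dK 0 1 x).
  - apply filter_forall. intros x0 t _. eexists. apply D_dK.
  - intros t _. apply (continuity_2d_pt_ext ddK). intros; symmetry; apply is_derive_unique, D_dK.
    apply cont2_ddK; auto.
  - assert (Hx0 : x <> 0) by lra. generalize (loc_neq0 x Hx0). apply filter_imp. intros y Hy.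
    apply exRI. intros z; apply cont_dK_r; auto.
  - assert (Hx0 : x <> 0) by lra.
    assert (e1 : ex_RInt (hK x) 0 1) by (apply exRI; intros z; apply cont_hK_r; auto).
    assert (e2 : ex_RInt (dK x) 0 1) by (apply exRI; intros z; apply cont_dK_r; auto).
    rewrite (RI_ext _ (fun t => -2 * x * (hK x t - dK x t))).
    rewrite RI_scal. 2: apply exRI_minus; auto.
    rewrite RI_minus by auto. rewrite hK_int by auto. unfold Dd; reflexivity.
    intros t _. rewrite (is_derive_unique _ _ _ (D_dK t x)). apply ddK_hK.
Qed.

Definition Yc x := exp (- x ^ 2) * Dd x - Eg x ^ 2.

Lemma D_Yc x : 0 < x -> is_derive Yc x 0.
Proof. intros Hx. eapply is_derive_eq. apply D_minus. apply D_mult. apply D_expmsq. apply D_Dd; auto.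
  apply (D_comp (fun z => z ^ 2) Eg). 2: apply D_E. auto_derive; auto.
  simpl. field. lra. Qed.

Lemma Yc_bound y : 0 < y -> Rabs (Yc y) <= 5 * exp (- y ^ 2).
Proof. intros Hy. unfold Yc. destruct (Dd_bound y) as [H1 H2]. lra.
  destruct (E_bound y) as [H3 H4]. lra. assert (H5 := exp_pos (- y ^ 2)).
  assert (exp (- y ^ 2) <= 1) by (rewrite <- exp_0; apply exp_le; nra).
  eapply Rle_trans. apply Rabs_triang. rewrite Rabs_Ropp.
  rewrite Rabs_mult, !Rabs_pos_eq by nra. nra. Qed.

Lemma craig x : 0 < x -> Dd x = exp (x ^ 2) * Eg x ^ 2.
Proof. intros Hx. assert (HY : Yc x = 0).
  { apply (zero_of_large _ 5). intros y Hy. set (m := Rmax x y).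
    assert (x <= m) by apply Rmax_l. assert (y <= m) by apply Rmax_r.
    rewrite (const_on Yc x m); auto. 2: intros z Hz; apply D_Yc; lra.
    eapply Rle_trans. apply Yc_bound. lra.
    apply Rle_trans with (5 / m). unfold Rdiv. apply Rmult_le_compat_l. lra. apply expm_le_inv. lra.
    unfold Rdiv. apply Rmult_le_compat_l. lra. apply Rinv_le_contravar; lra. }
  unfold Yc in HY. assert (exp (x^2) * exp (- x ^ 2) = 1) by (rewrite <- exp_plus; replace (x^2 + - x^2) with 0 by ring; apply exp_0).
  apply (Rmult_eq_compat_l (exp (x ^ 2))) in HY. rewrite Rmult_minus_distr_l, <- Rmult_assoc, H, Rmult_0_r in HY. lra. Qed.

Definition Vf x := RInt (vK x) 0 1.

Lemma D_V x : 0 < x -> is_derive Vf x (Dd x).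
Proof. intros Hx. eapply is_derive_eq. apply (is_derive_RInt_param vK 0 1 x).
  - apply filter_forall. intros x0 t _. eexists. apply D_vK.
  - intros t _. apply (continuity_2d_pt_ext dK). intros; symmetry; apply is_derive_unique, D_vK.
    apply cont2_dK; auto.
  - apply filter_forall. intros y. apply exRI. intros z; apply cont_vK_r.
  - apply RI_ext. intros t _. apply is_derive_unique, D_vK. Qed.

Lemma vK_abs x r : Rabs (vK x r) <= Rabs x.
Proof. destruct (Req_dec r 0) as [->|Hr]. unfold vK. rewrite Rmult_0_l. unfold Rdiv. rewrite Rmult_0_l, Rabs_R0. apply Rabs_pos.
  unfold vK, Rdiv. rewrite !Rabs_mult, Rabs_Rinv by apply neq1r.
  rewrite (Rabs_pos_eq (1 + r^2)) by (generalize (pos1r r); lra).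
  assert (0 < / (1 + r ^ 2) <= 1). { split. apply Rinv_0_lt_compat, pos1r. rewrite <- Rinv_1. apply Rinv_le_contravar. lra. nra. }
  assert (H1 := S_absle (x * / r)). rewrite Rabs_mult, Rabs_Rinv in H1 by auto.
  assert (0 < Rabs r) by (apply Rabs_pos_lt; auto).
  assert (Rabs r * Rabs (Sg (x * / r)) <= Rabs x).
  { apply Rle_trans with (Rabs r * (Rabs x * / Rabs r)). apply Rmult_le_compat_l; lra. right; field; lra. }
  assert (0 <= Rabs r * Rabs (Sg (x * / r))) by (apply Rmult_le_pos; apply Rabs_pos).
  nra. Qed.

Lemma V_abs x : Rabs (Vf x) <= Rabs x.
Proof. unfold Vf. eapply Rle_trans. apply abs_RInt_le_const with (M := Rabs x). lra.
  apply exRI; intros z; apply cont_vK_r. intros; apply vK_abs. lra. Qed.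

Definition wf x := exp (x ^ 2) * Eg x ^ 2.
Lemma Cn_wf : Cn wf.
Proof. apply Cn_mult. apply Cn_expsq. intros x. apply (continuous_comp Eg (fun z => z ^ 2)). apply Cn_E.
  apply (ex_derive_continuous (K:=R_AbsRing) (V:=R_NormedModule)). auto_derive; auto. Qed.
Definition Wf x := RInt wf 0 x.

Lemma W_small a : 0 < a <= 1 -> Rabs (Wf a) <= 12 * a.
Proof. intros Ha. unfold Wf. eapply Rle_trans. apply abs_RInt_le_const with (M := 12). lra. apply exRI, Cn_wf.
  intros t Ht. unfold wf. destruct (E_bound t) as [H1 H2]. lra.
  assert (exp (- t ^ 2) <= 1) by (rewrite <- exp_0; apply exp_le; nra).
  assert (exp (t ^ 2) <= 3) by (apply Rle_trans with (exp 1); [apply exp_le; nra| apply exp_le_3]).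
  assert (0 < exp (t ^ 2)) by apply exp_pos.
  assert (Eg t <= 2) by lra. assert (0 <= Eg t ^ 2 <= 4) by (split; [apply pow2_ge_0| replace (Eg t ^ 2) with (Eg t * Eg t) by ring; replace 4 with (2 * 2) by ring; apply Rmult_le_compat; lra]).
  rewrite Rabs_mult, !Rabs_pos_eq by lra. apply Rle_trans with (3 * 4). apply Rmult_le_compat; lra. lra. lra. Qed.

Lemma W_V X : 0 < X -> Wf X = Vf X.
Proof. intros HX. enough (Wf X - Vf X = 0) by lra. apply (zero_of_small _ 13). intros a Ha.
  set (a' := Rmin a X). assert (0 < a') by (apply Rmin_pos; lra). assert (a' <= a) by apply Rmin_l. assert (a' <= X) by apply Rmin_r.
  rewrite <- (const_on (fun x => Wf x - Vf x) a' X); auto.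
  eapply Rle_trans. apply Rabs_triang. rewrite Rabs_Ropp. assert (H2 := W_small a' ltac:(lra)).
  assert (H3 := V_abs a'). rewrite (Rabs_pos_eq a') in H3 by lra. lra.
  intros x Hx. eapply is_derive_eq. apply D_minus. apply D_prim, Cn_wf. apply D_V. lra.
  rewrite craig by lra. unfold wf. ring. Qed.

Lemma int_ln : RInt (fun r => r / (1 + r ^ 2)) 0 1 = ln 2 / 2.
Proof. change (@eq R (RInt (fun r => r / (1 + r ^ 2)) 0 1) (ln 2 / 2)). rewrite (ftc (fun r => ln (1 + r ^ 2) / 2)). replace (1 + 1 ^ 2) with 2 by ring.
  replace (1 + 0 ^ 2) with 1 by ring. rewrite ln_1. field.
  intros x. auto_derive. apply pos1r. simpl. field. generalize (pos1r x); simpl; lra.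
  apply Cn_der. intros; auto_derive; apply neq1r. Qed.

Definition L0 := sqrt PI / 2 * (ln 2 / 2).

Lemma V_lim X : 0 < X -> Rabs (Vf X - L0) <= Eg X.
Proof. intros HX. unfold L0. rewrite <- int_ln. unfold Vf.
  assert (e1 : ex_RInt (vK X) 0 1) by (apply exRI; intros z; apply cont_vK_r).
  assert (e2 : ex_RInt (fun r => r / (1 + r ^ 2)) 0 1) by (apply exRI, Cn_der; intros; auto_derive; apply neq1r).
  rewrite <- RI_scal, <- RI_minus; auto. 2: apply ex_RInt_scal with (k := sqrt PI / 2) in e2; exact e2.
  eapply Rle_trans. apply abs_RInt_le_const with (M := Eg X). lra.
  apply exRI_minus; auto. apply ex_RInt_scal with (k := sqrt PI / 2) in e2; exact e2.
  2: lra.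
  intros r Hr. destruct (E_bound X) as [H1 H2]. lra. destruct (Req_dec r 0) as [->|Hr0].
  unfold vK. match goal with |- Rabs ?e <= _ => replace e with 0 by (unfold Rdiv; ring) end.
  rewrite Rabs_R0; lra.
  assert (0 < r) by lra.
  replace (vK X r - sqrt PI / 2 * (r / (1 + r ^ 2))) with (- (r / (1 + r ^ 2) * Eg (X / r))) by (unfold vK, Eg; field; apply neq1r).
  rewrite Rabs_Ropp. destruct (E_bound (X / r)) as [H3 H4]. apply Rdiv_le_0_compat; lra.
  assert (Eg (X / r) <= Eg X). { apply E_decr. apply (Rmult_le_reg_r r). lra. unfold Rdiv. rewrite Rmult_assoc, Rinv_l by lra. nra. }
  assert (0 <= r / (1 + r ^ 2) <= 1). { split. apply Rdiv_le_0_compat. lra. apply pos1r.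
    apply (Rmult_le_reg_r (1 + r^2)). apply pos1r. unfold Rdiv. rewrite Rmult_assoc, Rinv_l by apply neq1r. nra. }
  rewrite Rabs_mult, !Rabs_pos_eq by lra. nra. Qed.

Lemma W_lim X : 0 < X -> Rabs (Wf X - L0) <= 2 * exp (- X ^ 2).
Proof. intros HX. rewrite W_V by auto. eapply Rle_trans. apply V_lim; auto. apply E_bound; lra. Qed.

Definition pf v := exp (- v ^ 2) * (2 * RInt gg 0 v).
Definition P u := RInt pf 0 u.

Lemma Cn_pf : Cn pf.
Proof. apply Cn_mult. apply Cn_expmsq. apply Cn_scal, Cn_prim, Cn_gg. Qed.
Lemma D_Fg x : is_derive Fg x (exp (- x ^ 2)).
Proof. eapply is_derive_eq. apply D_plus. apply D_S. apply D_const. ring. Qed.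

Lemma P_formula u : P u = 2 * Fg u * RInt gg 0 u + 2 * Wf (- u).
Proof. apply (same_deriv P (fun u => 2 * Fg u * RInt gg 0 u + 2 * Wf (- u)) pf 0).
  - intros x. apply D_prim, Cn_pf.
  - intros x. eapply is_derive_eq. apply D_plus. apply D_mult. apply D_scal, D_Fg. apply D_prim, Cn_gg.
    apply D_scal. apply (D_comp Wf (fun u => - u)). apply D_prim, Cn_wf.
    apply (is_derive_opp (fun z => z) x 1), D_id.
    unfold pf, gg, wf. rewrite <- Fg_Eg. replace ((- x) ^ 2) with (x ^ 2) by ring. simpl. unfold opp; simpl. ring.
  - unfold P, Wf. rewrite Ropp_0, !RI_point. ring. Qed.

Lemma xexpm x : 0 < x -> x * exp (- x ^ 2) <= / x.
Proof. intros Hx. assert (H := exp_ineq1_le (x ^ 2)).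
  assert (exp (x^2) * exp (- x ^ 2) = 1) by (rewrite <- exp_plus; replace (x^2 + - x^2) with 0 by ring; apply exp_0).
  assert (0 < exp (- x ^ 2)) by apply exp_pos.
  apply (Rmult_le_reg_l x); auto. rewrite Rinv_r by lra. nra. Qed.

Lemma gam_bound a : a <= 0 -> Rabs (RInt gg 0 a) <= 2 * (- a).
Proof. intros Ha. rewrite <- (opp_RInt_swap (V:=R_CompleteNormedModule)) by (apply exRI, Cn_gg).
  change (Rabs (- RInt gg a 0) <= 2 * - a). rewrite Rabs_Ropp.
  eapply Rle_trans. apply abs_RInt_le_const with (M := 2). auto. apply exRI, Cn_gg.
  intros t Ht. unfold gg. rewrite Fg_Eg. destruct (E_bound (- t)) as [H1 H2]. lra.
  assert (0 < exp (t ^ 2)) by apply exp_pos.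
  assert (exp (t^2) * exp (- (- t) ^ 2) = 1) by (rewrite <- exp_plus; replace (t^2 + - (-t)^2) with 0 by ring; apply exp_0).
  rewrite Rabs_mult, !Rabs_pos_eq by lra. nra. lra. Qed.

Lemma P_lim a : a <= -1 -> Rabs (P a - 2 * L0) <= 12 / (- a).
Proof. intros Ha. rewrite P_formula.
  replace (2 * Fg a * RInt gg 0 a + 2 * Wf (- a) - 2 * L0) with (2 * Fg a * RInt gg 0 a + 2 * (Wf (- a) - L0)) by ring.
  eapply Rle_trans. apply Rabs_triang. rewrite !Rabs_mult.
  assert (HW := W_lim (- a) ltac:(lra)). assert (HG := gam_bound a ltac:(lra)).
  rewrite Fg_Eg. destruct (E_bound (- a)) as [H1 H2]. lra.
  rewrite (Rabs_pos_eq 2), (Rabs_pos_eq (Eg (- a))) by lra.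
  assert (H3 := xexpm (- a) ltac:(lra)). assert (H4 := expm_le_inv (- a) ltac:(lra)).
  assert (H5 := exp_pos (- (- a) ^ 2)).
  assert (2 * Eg (- a) * Rabs (RInt gg 0 a) <= 8 * (- a * exp (- (- a) ^ 2))).
  { apply Rle_trans with (2 * (2 * exp (- (- a) ^ 2)) * (2 * (- a))). apply Rmult_le_compat. 
    apply Rmult_le_pos; lra. apply Rabs_pos. lra. auto. right; ring. }
  unfold Rdiv. apply Rle_trans with (8 * / - a + 4 * / - a). nra. right; ring. Qed.

Lemma chi2_eq z : chi 2 z = 2 * RInt (fun y => exp (y ^ 2) * (P y - 2 * L0)) 0 z.
Proof. cbn [chi]. apply Rmult_eq_compat_l. apply RI_ext. intros y _. f_equal.
  apply IG.
  - intros a. apply (is_RInt_ext (V:=R_NormedModule) pf). intros x _. unfold pf. rewrite <- chi1_eq. reflexivity.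
    apply (is_RInt_derive P pf). intros; apply D_prim, Cn_pf. intros; apply Cn_pf.
  - apply (lim_of_bound _ _ 12). apply P_lim. Qed.

Definition A1 z := RInt (fun u2 => exp (- u2 ^ 2) * RInt (fun t1 => exp (t1 ^ 2)) 0 u2) 0 z.
Definition Cc z := RInt (fun t1 => exp (t1 ^ 2) * RInt (fun u1 => exp (- u1 ^ 2)) 0 t1) 0 z.
Definition B1 z := RInt (fun u2 => exp (- u2 ^ 2) * Cc u2) 0 z.

Lemma Cn_phi1 : Cn phi1.
Proof. apply Cn_prim, Cn_expsq. Qed.
Lemma Cn_Cc : Cn Cc.
Proof. apply Cn_prim, Cn_mult. apply Cn_expsq. apply Cn_S. Qed.
Lemma Cn_A1i : Cn (fun u2 => exp (- u2 ^ 2) * RInt (fun t1 => exp (t1 ^ 2)) 0 u2).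
Proof. apply Cn_mult. apply Cn_expmsq. apply Cn_phi1. Qed.
Lemma Cn_B1i : Cn (fun u2 => exp (- u2 ^ 2) * Cc u2).
Proof. apply Cn_mult. apply Cn_expmsq. apply Cn_Cc. Qed.
Lemma Cn_A1 : Cn A1.
Proof. apply Cn_prim, Cn_A1i. Qed.
Lemma Cn_B1 : Cn B1.
Proof. apply Cn_prim, Cn_B1i. Qed.

Lemma psi1_Cc z : psi1 z = 2 * Cc z.
Proof. reflexivity. Qed.

Lemma P_A1B1 z : P z = sqrt PI * A1 z + 2 * B1 z.
Proof. apply (same_deriv P (fun z => sqrt PI * A1 z + 2 * B1 z) pf 0).
  - intros x. apply D_prim, Cn_pf.
  - intros x. eapply is_derive_eq. apply D_plus. apply D_scal, D_prim, Cn_A1i. apply D_scal, D_prim, Cn_B1i.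
    unfold pf. rewrite <- chi1_eq, chi1_formula, psi1_Cc. unfold phi1. ring.
  - unfold P, A1, B1. rewrite !RI_point. ring. Qed.

Lemma phi2_A1 z : phi2 z = 2 * RInt (fun t => exp (t ^ 2) * A1 t) 0 z.
Proof. reflexivity. Qed.
Lemma psi2_B1 z : psi2 z = 4 * RInt (fun t => exp (t ^ 2) * B1 t) 0 z.
Proof. reflexivity. Qed.

Lemma chi2_formula z : chi 2 z = sqrt PI * (phi2 z - ln 2 * phi1 z) + psi2 z.
Proof. rewrite chi2_eq. 
  apply (same_deriv (fun z => 2 * RInt (fun y => exp (y ^ 2) * (P y - 2 * L0)) 0 z)
    (fun z => sqrt PI * (phi2 z - ln 2 * phi1 z) + psi2 z) (fun z => 2 * (exp (z ^ 2) * (P z - 2 * L0))) 0).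
  - intros x. apply D_scal, (D_prim (fun y => exp (y ^ 2) * (P y - 2 * L0))). apply Cn_mult. apply Cn_expsq. apply Cn_minus. apply Cn_prim, Cn_pf. apply Cn_const.
  - intros x. eapply is_derive_eq. apply D_plus. apply D_scal. apply D_minus.
    apply (D_ext (fun z => 2 * RInt (fun t => exp (t ^ 2) * A1 t) 0 z)). intros; symmetry; apply phi2_A1.
    apply D_scal, (D_prim (fun t => exp (t ^ 2) * A1 t)). apply Cn_mult. apply Cn_expsq. apply Cn_A1.
    apply D_scal, (D_prim (fun t => exp (t ^ 2))), Cn_expsq.
    apply (D_ext (fun z => 4 * RInt (fun t => exp (t ^ 2) * B1 t) 0 z)). intros; symmetry; apply psi2_B1.
    apply D_scal, (D_prim (fun t => exp (t ^ 2) * B1 t)). apply Cn_mult. apply Cn_expsq. apply Cn_B1.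
    rewrite P_A1B1. unfold L0. field.
  - rewrite RI_point. unfold phi2, phi1, psi2. rewrite !RI_point. ring. Qed.

Lemma phi1_odd x : phi1 (- x) = - phi1 x.
Proof. apply prim_odd. apply Cn_expsq. intros; f_equal; ring. Qed.

Lemma Cc_even x : Cc (- x) = Cc x.
Proof. apply prim_even. apply Cn_mult. apply Cn_expsq. apply Cn_S.
  intros y. change (exp ((- y) ^ 2) * Sg (- y) = - (exp (y ^ 2) * Sg y)). rewrite S_odd.
  replace ((- y) ^ 2) with (y ^ 2) by ring. ring. Qed.

Lemma psi1_even x : psi1 (- x) = psi1 x.
Proof. rewrite !psi1_Cc, Cc_even. reflexivity. Qed.

Lemma A1_even x : A1 (- x) = A1 x.
Proof. apply prim_even. apply Cn_A1i. intros y.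
  change (exp (- (- y) ^ 2) * phi1 (- y) = - (exp (- y ^ 2) * phi1 y)). rewrite phi1_odd.
  replace ((- y) ^ 2) with (y ^ 2) by ring. ring. Qed.

Lemma B1_odd x : B1 (- x) = - B1 x.
Proof. apply prim_odd. apply Cn_B1i. intros y. rewrite Cc_even. replace ((- y) ^ 2) with (y ^ 2) by ring. ring. Qed.

Lemma phi2_odd x : phi2 (- x) = - phi2 x.
Proof. rewrite !phi2_A1. rewrite prim_odd. ring. apply Cn_mult. apply Cn_expsq. apply Cn_A1.
  intros y. rewrite A1_even. replace ((- y) ^ 2) with (y ^ 2) by ring. ring. Qed.

Lemma psi2_even x : psi2 (- x) = psi2 x.
Proof. rewrite !psi2_B1. rewrite prim_even. ring. apply Cn_mult. apply Cn_expsq. apply Cn_B1.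
  intros y. rewrite B1_odd. replace ((- y) ^ 2) with (y ^ 2) by ring. ring. Qed.

Theorem lemma2 :
  (forall z : R,
     chi 1 z = sqrt PI * phi1 z + psi1 z /\
     chi 2 z = sqrt PI * (phi2 z - ln 2 * phi1 z) + psi2 z) /\
  (forall x : R, phi1 (- x) = - phi1 x) /\
  (forall x : R, phi2 (- x) = - phi2 x) /\
  (forall x : R, psi1 (- x) = psi1 x) /\
  (forall x : R, psi2 (- x) = psi2 x).
Proof.
  split. intros z; split. apply chi1_formula. apply chi2_formula.
  split. apply phi1_odd. split. apply phi2_odd. split. apply psi1_even. apply psi2_even.
Qed.
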